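(* Let $n\ge2$ and consider $n$ qubits, $\mathcal H=(\mathbb C^2)^{\otimes n}$, in the drift-less setting with neighborhoods $\mathcal N_1,\dots,\mathcal N_M$ each satisfying $|\mathcal N_k|<n/2$ (i.e. no neighborhood contains $n/2$ qubits if $n$ is even, or $(n+1)/2$ qubits if $n$ is odd). Then the GHZ state $\rho_{\mathrm{GHZ}}=|\Psi_{\mathrm{GHZ}}\rangle\langle\Psi_{\mathrm{GHZ}}|$, $|\Psi_{\mathrm{GHZ}}\rangle=(|0\rangle^{\otimes n}+|1\rangle^{\otimes n})/\sqrt2$, is not QLS.
   Context: Neighborhoods are subsets of $\{1,\dots,n\}$. QL operator: $X_{\mathcal N_k}\otimes I_{\bar{\mathcal N}_k}$; QL Hamiltonian: sum of Hermitian QL operators. $\mathcal L(H,\{D_k\})(\rho)=-i[H,\rho]+\sum_k(D_k\rho D_k^\dagger-\frac12\{D_k^\dagger D_k,\rho\})$. A pure state $\rho_d=|\Psi\rangle\langle\Psi|$ is QLS if there exist a QL Hamiltonian $H_c$ and finitely many QL operators $D_k$ with $D_k|\Psi\rangle=0$ and $H_c|\Psi\rangle\in\mathbb R|\Psi\rangle$ such that $e^{\mathcal L(H_c,\{D_k\})t}(\rho_0)\to\rho_d$ for every density operator $\rho_0$. *)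

(* Defs.v *)
From Stdlib Require Import Reals Lra Lia Arith List.
Import ListNotations.
Open Scope R_scope.

Record C := mkC { re : R; im : R }.
Definition C0 : C := mkC 0 0.
Definition C1 : C := mkC 1 0.
Definition Cadd (a b : C) : C := mkC (re a + re b) (im a + im b).
Definition Copp (a : C) : C := mkC (- re a) (- im a).
Definition Cmul (a b : C) : C :=
  mkC (re a * re b - im a * im b) (re a * im b + im a * re b).
Definition Cconj (a : C) : C := mkC (re a) (- im a).
Definition Csum (d : nat) (f : nat -> C) : C :=
  fold_right (fun k acc => Cadd (f k) acc) C0 (seq 0 d).

(* ---------- d x d complex matrices / vectors (only indices < d matter) ---------- *)
Definition Mat := nat -> nat -> C.
Definition Vec := nat -> C.
Definition Mzero : Mat := fun _ _ => C0.
Definition Madd (A B : Mat) : Mat := fun i j => Cadd (A i j) (B i j).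
Definition Msub (A B : Mat) : Mat := fun i j => Cadd (A i j) (Copp (B i j)).
Definition Mscale (c : C) (A : Mat) : Mat := fun i j => Cmul c (A i j).
Definition Mmul (d : nat) (A B : Mat) : Mat :=
  fun i j => Csum d (fun k => Cmul (A i k) (B k j)).
Definition Madj (A : Mat) : Mat := fun i j => Cconj (A j i).
Definition Msum (As : list Mat) : Mat := fold_right Madd Mzero As.
Definition Mapply (d : nat) (A : Mat) (v : Vec) : Vec :=
  fun i => Csum d (fun k => Cmul (A i k) (v k)).

Definition Hermitian (d : nat) (A : Mat) : Prop :=
  forall i j, (i < d)%nat -> (j < d)%nat -> A i j = Cconj (A j i).

Definition density (d : nat) (A : Mat) : Prop :=
  Hermitian d A /\
  (forall v : Vec, 0 <= re (Csum d (fun i => Cmul (Cconj (v i)) (Mapply d A v i)))) /\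
  Csum d (fun i => A i i) = C1.

Definition proj (psi : Vec) : Mat := fun i j => Cmul (psi i) (Cconj (psi j)).

(* ---------- quasi-locality on n qubits ----------
   Basis index i < 2^n; qubit q (0 <= q < n) is bit q of i.
   Neighborhoods are lists of qubits (subsets of {0,...,n-1}). *)
Definition mask (N : list nat) : nat := fold_right (fun q acc => (2 ^ q + acc)%nat) 0%nat N.

Definition agree_off (n : nat) (N : list nat) (i j : nat) : Prop :=
  forall q, (q < n)%nat -> ~ In q N -> Nat.testbit i q = Nat.testbit j q.

(* A = X_N (x) I_{complement of N}: entries X[i_N, j_N] * delta(i_Nbar, j_Nbar) *)
Definition QL_on (n : nat) (N : list nat) (A : Mat) : Prop :=
  exists X : nat -> nat -> C,
    forall i j, (i < 2 ^ n)%nat -> (j < 2 ^ n)%nat ->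
      (agree_off n N i j -> A i j = X (Nat.land i (mask N)) (Nat.land j (mask N))) /\
      (~ agree_off n N i j -> A i j = C0).

Definition QL_op (n : nat) (Ns : list (list nat)) (A : Mat) : Prop :=
  exists k, (k < length Ns)%nat /\ QL_on n (nth k Ns []) A.

Definition dissip (d : nat) (D rho : Mat) : Mat :=
  Msub (Mmul d (Mmul d D rho) (Madj D))
       (Mscale (mkC (1/2) 0)
          (Madd (Mmul d (Mmul d (Madj D) D) rho) (Mmul d rho (Mmul d (Madj D) D)))).

Definition Lindblad (d : nat) (H : Mat) (Ds : list Mat) (rho : Mat) : Mat :=
  Madd (Mscale (mkC 0 (-1)) (Msub (Mmul d H rho) (Mmul d rho H)))
       (fold_right (fun D acc => Madd (dissip d D rho) acc) Mzero Ds).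

Definition exp_partial (L : Mat -> Mat) (t : R) (rho0 : Mat) (N : nat) : Mat :=
  fold_right (fun k acc =>
      Madd (Mscale (mkC (t ^ k / INR (fact k)) 0) (Nat.iter k L rho0)) acc)
    Mzero (seq 0 (S N)).

(* rho = e^{L t}(rho0), i.e. rho is the (entrywise) limit of the exponential series *)
Definition is_exp (d : nat) (L : Mat -> Mat) (t : R) (rho0 rho : Mat) : Prop :=
  forall i j, (i < d)%nat -> (j < d)%nat ->
    Un_cv (fun N => re (exp_partial L t rho0 N i j)) (re (rho i j)) /\
    Un_cv (fun N => im (exp_partial L t rho0 N i j)) (im (rho i j)).

Definition exp_converges (d : nat) (L : Mat -> Mat) (rho0 rhod : Mat) : Prop :=
  forall eps, eps > 0 -> exists T : R, forall t rho, t >= T -> is_exp d L t rho0 rho ->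
    forall i j, (i < d)%nat -> (j < d)%nat ->
      Rabs (re (rho i j) - re (rhod i j)) < eps /\
      Rabs (im (rho i j) - im (rhod i j)) < eps.

(* Quasi-locally stabilizable pure state |psi><psi| on n qubits.
   The QL Hamiltonian H_c is Msum Hs with each summand a Hermitian QL operator. *)
Definition QLS (n : nat) (Ns : list (list nat)) (psi : Vec) : Prop :=
  let d := (2 ^ n)%nat in
  exists (Hs Ds : list Mat),
    Forall (fun h => Hermitian d h /\ QL_op n Ns h) Hs /\
    Forall (QL_op n Ns) Ds /\
    Forall (fun D => forall i, (i < d)%nat -> Mapply d D psi i = C0) Ds /\
    (exists r : R, forall i, (i < d)%nat ->
        Mapply d (Msum Hs) psi i = Cmul (mkC r 0) (psi i)) /\
    (forall rho0, density d rho0 ->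
        exp_converges d (Lindblad d (Msum Hs) Ds) rho0 (proj psi)).

Definition ghz (n : nat) : Vec :=
  fun i => if (Nat.eqb i 0 || Nat.eqb i (2 ^ n - 1))%bool
           then mkC (/ sqrt 2) 0 else C0.

Definition neighborhood (n : nat) (N : list nat) : Prop :=
  NoDup N /\ Forall (fun q => (q < n)%nat) N.

(* Main.v *)
From Pilot Require Import Defs.
From Stdlib Require Import Reals Arith List Lra Lia Classical.
Import Pilot.Defs.
Import ListNotations.
Open Scope R_scope.

Lemma Ceq (a b : C) : re a = re b -> im a = im b -> a = b.
Proof. destruct a, b; simpl; intros; subst; reflexivity. Qed.
Ltac ceq := apply Ceq; cbn [re im Cadd Cmul Copp Cconj C0 C1]; ring.

Definition CS (f : nat -> C) s len := fold_right (fun k acc => Cadd (f k) acc) C0 (seq s len).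
Lemma CS_S f s len : CS f s (S len) = Cadd (f s) (CS f (S s) len).
Proof. reflexivity. Qed.

Lemma CS_zero f len : forall s, (forall k, (s <= k < s+len)%nat -> f k = C0) -> CS f s len = C0.
Proof.
  induction len; intros s H; [reflexivity|].
  rewrite CS_S, H by lia. rewrite IHlen by (intros; apply H; lia). ceq.
Qed.

Lemma CS_delta f m len : forall s, (s <= m < s+len)%nat ->
  (forall k, (s <= k < s+len)%nat -> k <> m -> f k = C0) -> CS f s len = f m.
Proof.
  induction len; intros s Hm H; [lia|]. rewrite CS_S.
  destruct (Nat.eq_dec s m).
  - subst. rewrite CS_zero by (intros; apply H; lia). ceq.
  - rewrite H by lia. rewrite IHlen by (try lia; intros; apply H; lia). ceq.
Qed.

Lemma CS_delta2 f m1 m2 len : forall s, (s <= m1 < s+len)%nat -> (s <= m2 < s+len)%nat -> m1 <> m2 ->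
  (forall k, (s <= k < s+len)%nat -> k <> m1 -> k <> m2 -> f k = C0) -> CS f s len = Cadd (f m1) (f m2).
Proof.
  induction len; intros s H1 H2 Hne H; [lia|]. rewrite CS_S.
  destruct (Nat.eq_dec s m1).
  - subst. rewrite (CS_delta f m2) by (try lia; intros; apply H; lia). reflexivity.
  - destruct (Nat.eq_dec s m2).
    + subst. rewrite (CS_delta f m1) by (try lia; intros; apply H; lia). ceq.
    + rewrite H by lia. rewrite IHlen by (try lia; intros; apply H; lia). ceq.
Qed.

Lemma Csum_zero d f : (forall k, (k<d)%nat -> f k = C0) -> Csum d f = C0.
Proof. intros. apply (CS_zero f d 0). intros; apply H; lia. Qed.
Lemma Csum_delta d f m : (m<d)%nat -> (forall k, (k<d)%nat -> k<>m -> f k = C0) -> Csum d f = f m.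
Proof. intros. apply (CS_delta f m d 0); try lia. intros; apply H0; lia. Qed.
Lemma Csum_delta2 d f m1 m2 : (m1<d)%nat -> (m2<d)%nat -> m1 <> m2 ->
  (forall k, (k<d)%nat -> k<>m1 -> k<>m2 -> f k = C0) -> Csum d f = Cadd (f m1) (f m2).
Proof. intros. apply (CS_delta2 f m1 m2 d 0); try lia. intros; apply H2; lia. Qed.

Lemma Mmul_dr d A X i j : (0<d)%nat -> (forall k, (k<d)%nat -> k<>0%nat -> X k j = C0) ->
  Mmul d A X i j = Cmul (A i 0%nat) (X 0%nat j).
Proof. intros. unfold Mmul. rewrite (Csum_delta d _ 0); auto. intros; rewrite H0; auto; ceq. Qed.
Lemma Mmul_dl d A X i j : (0<d)%nat -> (forall k, (k<d)%nat -> k<>0%nat -> A i k = C0) ->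
  Mmul d A X i j = Cmul (A i 0%nat) (X 0%nat j).
Proof. intros. unfold Mmul. rewrite (Csum_delta d _ 0); auto. intros; rewrite H0; auto; ceq. Qed.
Lemma Mmul_zl d A X i j : (forall k, (k<d)%nat -> A i k = C0) -> Mmul d A X i j = C0.
Proof. intros. unfold Mmul. apply Csum_zero. intros; rewrite H; auto; ceq. Qed.
Lemma Mmul_zr d A X i j : (forall k, (k<d)%nat -> X k j = C0) -> Mmul d A X i j = C0.
Proof. intros. unfold Mmul. apply Csum_zero. intros; rewrite H; auto; ceq. Qed.

Lemma pigeon n (L : list nat) : (length L < n)%nat -> exists q, (q<n)%nat /\ ~ In q L.
Proof.
  intros. apply NNPP; intro Hc. assert (incl (seq 0 n) L).
  { intros q Hq. apply in_seq in Hq. destruct (in_dec Nat.eq_dec q L); auto.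
    exfalso; apply Hc; exists q; split; [lia|auto]. }
  pose proof (NoDup_incl_length (seq_NoDup n 0) H0). rewrite length_seq in H1. lia.
Qed.

Lemma testbit_ones n q : (q < n)%nat -> Nat.testbit (2^n - 1) q = true.
Proof. intros. rewrite Nat.sub_1_r, <- Nat.ones_equiv. apply Nat.ones_spec_low; auto. Qed.

Lemma AO n N N' i : agree_off n N i 0 -> agree_off n N' i (2^n-1) ->
  (length N + length N' < n)%nat -> False.
Proof.
  intros H1 H2 Hl. destruct (pigeon n (N++N')) as [q [Hq Hn]].
  { rewrite length_app; lia. }
  rewrite in_app_iff in Hn.
  specialize (H1 q Hq (fun h => Hn (or_introl h))).
  specialize (H2 q Hq (fun h => Hn (or_intror h))).
  rewrite Nat.bits_0 in H1. rewrite testbit_ones in H2 by lia. congruence.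
Qed.

Lemma dpos n : (2 <= n)%nat -> (4 <= 2^n)%nat.
Proof. intros. change 4%nat with (2^2)%nat. apply Nat.pow_le_mono_r; lia. Qed.

Definition SP n (A : Mat) := forall i j, (i < 2^n)%nat -> (j < 2^n)%nat -> A i j <> C0 ->
  exists N, (2 * length N < n)%nat /\ agree_off n N i j.

Lemma SP_QL n Ns A : Forall (fun N => neighborhood n N /\ (2 * length N < n)%nat) Ns ->
  QL_op n Ns A -> SP n A.
Proof.
  intros HF [k [Hk [X HX]]] i j Hi Hj Hnz. exists (nth k Ns []). split.
  - rewrite Forall_forall in HF. apply (HF _ (nth_In _ _ Hk)).
  - destruct (classic (agree_off n (nth k Ns []) i j)); auto.
    exfalso; apply Hnz; apply (proj2 (HX i j Hi Hj)); auto.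
Qed.

Lemma Msum_cons x l i j : Msum (x::l) i j = Cadd (x i j) (Msum l i j).
Proof. reflexivity. Qed.

Lemma SP_Msum n Hs : Forall (SP n) Hs -> SP n (Msum Hs).
Proof.
  induction 1; intros i j Hi Hj Hnz.
  - exfalso; apply Hnz; reflexivity.
  - rewrite Msum_cons in Hnz. destruct (classic (x i j = C0)).
    + apply IHForall; auto. intro E; apply Hnz; rewrite H1, E; ceq.
    + apply H; auto.
Qed.

Lemma dich n A i : (2 <= n)%nat -> SP n A -> (i < 2^n)%nat -> A i 0%nat = C0 \/ A i (2^n-1)%nat = C0.
Proof.
  intros Hn HS Hi. pose proof (dpos n Hn).
  destruct (classic (A i 0%nat = C0)); auto. destruct (classic (A i (2^n-1)%nat = C0)); auto.
  exfalso. destruct (HS i 0%nat) as [N [HN1 HN2]]; auto; try lia.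
  destruct (HS i (2^n-1)%nat) as [N' [HN1' HN2']]; auto; try lia.
  apply (AO n N N' i); auto; lia.
Qed.

Lemma SP_corner1 n A : (2 <= n)%nat -> SP n A -> A (2^n-1)%nat 0%nat = C0.
Proof.
  intros Hn HS. pose proof (dpos n Hn). destruct (classic (A (2^n-1)%nat 0%nat = C0)); auto.
  exfalso. destruct (HS (2^n-1)%nat 0%nat) as [N [HN1 HN2]]; auto; try lia.
  apply (AO n N N (2^n-1)); auto; [ unfold agree_off; intros; reflexivity | lia].
Qed.

Lemma SP_corner2 n A : (2 <= n)%nat -> SP n A -> A 0%nat (2^n-1)%nat = C0.
Proof.
  intros Hn HS. pose proof (dpos n Hn). destruct (classic (A 0%nat (2^n-1)%nat = C0)); auto.
  exfalso. destruct (HS 0%nat (2^n-1)%nat) as [N [HN1 HN2]]; auto; try lia.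
  apply (AO n N N 0); auto; [ unfold agree_off; intros; reflexivity | lia].
Qed.

Definition s2 : C := mkC (/ sqrt 2) 0.

Lemma ghz_0 n : ghz n 0%nat = s2.
Proof. reflexivity. Qed.
Lemma ghz_last n : (2^n - 1 <> 0)%nat -> ghz n (2^n-1)%nat = s2.
Proof. intros. unfold ghz. rewrite Nat.eqb_refl, Bool.orb_true_r. reflexivity. Qed.
Lemma ghz_other n i : i <> 0%nat -> i <> (2^n-1)%nat -> ghz n i = C0.
Proof.
  intros. unfold ghz. rewrite (proj2 (Nat.eqb_neq _ _) H), (proj2 (Nat.eqb_neq _ _) H0). reflexivity.
Qed.

Lemma Mapply_ghz n A i : (2 <= n)%nat ->
  Mapply (2^n) A (ghz n) i = Cmul (Cadd (A i 0%nat) (A i (2^n-1)%nat)) s2.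
Proof.
  intros Hn. pose proof (dpos n Hn). unfold Mapply.
  rewrite (Csum_delta2 _ _ 0 (2^n-1)); try lia.
  - rewrite ghz_0, ghz_last by lia. ceq.
  - intros. rewrite ghz_other by auto. ceq.
Qed.

Lemma s2_nz : / sqrt 2 <> 0.
Proof. apply Rinv_neq_0_compat. apply Rgt_not_eq. apply sqrt_lt_R0. lra. Qed.

Lemma Cmul_s_inj x y : Cmul x s2 = Cmul y s2 -> x = y.
Proof.
  intro H. pose proof s2_nz.
  assert (H1 : re (Cmul x s2) = re (Cmul y s2)) by (rewrite H; auto).
  assert (H2 : im (Cmul x s2) = im (Cmul y s2)) by (rewrite H; auto).
  cbn in H1, H2. apply Ceq.
  - apply (Rmult_eq_reg_r (/ sqrt 2)); auto. lra.
  - apply (Rmult_eq_reg_r (/ sqrt 2)); auto. lra.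
Qed.

Lemma col0 n A c : (2 <= n)%nat -> SP n A ->
  (forall i, (i < 2^n)%nat -> Mapply (2^n) A (ghz n) i = Cmul c (ghz n i)) ->
  forall i, (i < 2^n)%nat -> A i 0%nat = if Nat.eqb i 0 then c else C0.
Proof.
  intros Hn HS HA i Hi. pose proof (dpos n Hn).
  destruct (Nat.eq_dec i 0).
  - subst. simpl. specialize (HA 0%nat Hi).
    rewrite Mapply_ghz, ghz_0, SP_corner2 in HA by auto.
    apply Cmul_s_inj. rewrite <- HA. ceq.
  - rewrite (proj2 (Nat.eqb_neq _ _) n0).
    destruct (Nat.eq_dec i (2^n-1)).
    + subst. apply SP_corner1; auto.
    + specialize (HA i Hi). rewrite Mapply_ghz, ghz_other in HA by auto.
      assert (Hs : Cadd (A i 0%nat) (A i (2^n-1)%nat) = C0).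
      { apply Cmul_s_inj. rewrite HA. ceq. }
      destruct (dich n A i Hn HS Hi) as [Ha|Hb]; auto.
      rewrite <- Hs, Hb. ceq.
Qed.

Lemma herm_Msum d Hs : Forall (Hermitian d) Hs -> Hermitian d (Msum Hs).
Proof.
  induction 1; intros i j Hi Hj.
  - unfold Msum, Mzero; simpl; ceq.
  - rewrite !Msum_cons. rewrite (H i j Hi Hj), (IHForall i j Hi Hj). ceq.
Qed.

Definition Emat : Mat := fun i j => if (Nat.eqb i 0 && Nat.eqb j 0)%bool then C1 else C0.
Lemma E00 : Emat 0%nat 0%nat = C1. Proof. reflexivity. Qed.
Lemma E_nz1 k j : k <> 0%nat -> Emat k j = C0.
Proof. intros. unfold Emat. rewrite (proj2 (Nat.eqb_neq _ _) H). reflexivity. Qed.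
Lemma E_nz2 i k : k <> 0%nat -> Emat i k = C0.
Proof. intros. unfold Emat. rewrite (proj2 (Nat.eqb_neq _ _) H), Bool.andb_false_r. reflexivity. Qed.

Lemma Mapply_E d v i : (0 < d)%nat -> Mapply d Emat v i = Cmul (Emat i 0%nat) (v 0%nat).
Proof. intros. unfold Mapply. rewrite (Csum_delta d _ 0); auto. intros; rewrite E_nz2; auto; ceq. Qed.

Lemma E_density d : (0 < d)%nat -> density d Emat.
Proof.
  intros Hd. split; [|split].
  - intros i j _ _. unfold Emat. destruct (Nat.eqb i 0), (Nat.eqb j 0); simpl; ceq.
  - intros v. rewrite (Csum_delta d _ 0); auto.
    + rewrite Mapply_E, E00 by auto. cbn [re im Cadd Cmul Copp Cconj C0 C1]. nra.
    + intros. rewrite Mapply_E, E_nz1 by auto. ceq.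
  - rewrite (Csum_delta d _ 0); auto. intros; rewrite E_nz1; auto.
Qed.

Definition FD d Ds X : Mat := fold_right (fun D acc => Madd (dissip d D X) acc) Mzero Ds.

Lemma FD_zero d Ds X i j : (forall D, In D Ds -> dissip d D X i j = C0) -> FD d Ds X i j = C0.
Proof.
  induction Ds; intros H; [reflexivity|].
  change (FD d (a::Ds) X i j) with (Cadd (dissip d a X i j) (FD d Ds X i j)).
  rewrite H by (left; auto). rewrite IHDs by (intros; apply H; right; auto). ceq.
Qed.

Lemma Lz d H Ds X : (forall i j, (i<d)%nat -> (j<d)%nat -> X i j = C0) ->
  forall i j, (i<d)%nat -> (j<d)%nat -> Lindblad d H Ds X i j = C0.
Proof.
  intros HX i j Hi Hj. unfold Lindblad. unfold Madd at 1, Mscale at 1, Msub at 1.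
  change (fold_right (fun D acc => Madd (dissip d D X) acc) Mzero Ds) with (FD d Ds X).
  rewrite FD_zero.
  - rewrite (Mmul_zr d H X), (Mmul_zl d X H) by (intros; apply HX; auto). ceq.
  - intros D _. unfold dissip, Msub, Mscale, Madd.
    rewrite (Mmul_zl d (Mmul d D X) (Madj D)) by (intros; apply Mmul_zr; intros; apply HX; auto).
    rewrite (Mmul_zr d _ X) by (intros; apply HX; auto).
    rewrite (Mmul_zl d X) by (intros; apply HX; auto). ceq.
Qed.

Lemma exp_const d L t E : (forall k i j, (1 <= k)%nat -> (i<d)%nat -> (j<d)%nat -> Nat.iter k L E i j = C0) ->
  forall N i j, (i<d)%nat -> (j<d)%nat -> exp_partial L t E N i j = E i j.
Proof.
  intros HI N i j Hi Hj.
  assert (Ht : forall len s, (1 <= s)%nat ->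
     fold_right (fun k acc => Madd (Mscale (mkC (t ^ k / INR (fact k)) 0) (Nat.iter k L E)) acc)
       Mzero (seq s len) i j = C0).
  { induction len; intros s Hs; [reflexivity|].
    cbn [seq fold_right]. unfold Madd at 1, Mscale at 1. rewrite IHlen by lia.
    rewrite HI by auto. ceq. }
  unfold exp_partial. cbn [seq fold_right]. unfold Madd at 1, Mscale at 1.
  rewrite Ht by lia. cbn [Nat.iter pow fact INR]. change (Nat.iter 0 L E) with E. apply Ceq; cbn [re im Cadd Cmul C0]; field.
Qed.

Lemma Un_cv_const u l : (forall N, u N = l) -> Un_cv u l.
Proof.
  intros H eps He. exists 0%nat. intros. unfold R_dist. rewrite H.
  replace (l - l) with 0 by ring. rewrite Rabs_R0; lra.
Qed.

Theorem proposition5 (n : nat) (Ns : list (list nat)) :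
  (2 <= n)%nat ->
  Forall (fun N => neighborhood n N /\ (2 * length N < n)%nat) Ns ->
  ~ QLS n Ns (ghz n).
Proof.
  intros Hn HF HQ. unfold QLS in HQ. cbv zeta in HQ.
  destruct HQ as [Hs [Ds [HHs [HDs [HDk [[r Hr] Hconv]]]]]].
  pose proof (dpos n Hn) as Hd.
  set (d := (2^n)%nat) in *.
  set (H := Msum Hs) in *.
  assert (HSP : SP n H).
  { apply SP_Msum. eapply Forall_impl; [|exact HHs]. intros h [_ Hq]. eapply SP_QL; eauto. }
  assert (Hherm : Hermitian d H).
  { apply herm_Msum. eapply Forall_impl; [|exact HHs]. intros h [Hh _]. exact Hh. }
  assert (HH : forall i, (i < d)%nat -> H i 0%nat = if Nat.eqb i 0 then mkC r 0 else C0).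
  { apply col0; auto. }
  assert (HD : forall D, In D Ds -> forall i, (i < d)%nat -> D i 0%nat = C0).
  { intros D HDin i Hi. rewrite Forall_forall in HDs, HDk.
    rewrite (col0 n D C0 Hn (SP_QL n Ns D HF (HDs D HDin))); auto.
    - destruct (Nat.eqb i 0); auto.
    - intros k Hk. change (2^n)%nat with d. rewrite (HDk D HDin k Hk). ceq. }
  assert (LE : forall i j, (i<d)%nat -> (j<d)%nat -> Lindblad d H Ds Emat i j = C0).
  { intros i j Hi Hj. unfold Lindblad. unfold Madd at 1, Mscale at 1, Msub at 1.
    change (fold_right (fun D acc => Madd (dissip d D Emat) acc) Mzero Ds) with (FD d Ds Emat).
    rewrite FD_zero.
    - rewrite (Mmul_dr d H Emat) by (try lia; intros; apply E_nz1; auto).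
      rewrite (Mmul_dl d Emat H) by (try lia; intros; apply E_nz2; auto).
      rewrite (Hherm 0%nat j) by lia.
      rewrite (HH i Hi), (HH j Hj). unfold Emat.
      destruct (Nat.eqb i 0), (Nat.eqb j 0); simpl; ceq.
    - intros D HDin. pose proof (HD D HDin) as HD0. unfold dissip, Msub, Mscale, Madd.
      rewrite (Mmul_zl d (Mmul d D Emat) (Madj D)).
      2:{ intros k Hk. rewrite (Mmul_dr d D Emat) by (try lia; intros; apply E_nz1; auto).
          rewrite HD0 by auto. ceq. }
      rewrite (Mmul_dr d (Mmul d (Madj D) D) Emat) by (try lia; intros; apply E_nz1; auto).
      rewrite (Mmul_dl d Emat (Mmul d (Madj D) D)) by (try lia; intros; apply E_nz2; auto).
      rewrite (Mmul_zr d (Madj D) D i 0%nat) by (intros; apply HD0; auto).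
      rewrite (Mmul_zl d (Madj D) D 0%nat j).
      2:{ intros k Hk. unfold Madj. rewrite HD0 by auto. ceq. }
      ceq. }
  assert (IT : forall k i j, (1 <= k)%nat -> (i<d)%nat -> (j<d)%nat ->
                 Nat.iter k (Lindblad d H Ds) Emat i j = C0).
  { intros k. destruct k as [|k]; [intros; lia|]. induction k; intros i j _ Hi Hj.
    - apply LE; auto.
    - change (Nat.iter (S (S k)) (Lindblad d H Ds) Emat)
        with (Lindblad d H Ds (Nat.iter (S k) (Lindblad d H Ds) Emat)).
      apply Lz; auto. intros; apply IHk; auto; lia. }
  destruct (Hconv Emat (E_density d ltac:(lia)) (1/4) ltac:(lra)) as [T HT].
  assert (Hex : is_exp d (Lindblad d H Ds) T Emat Emat).
  { intros i j Hi Hj. split; apply Un_cv_const; intros N;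
      rewrite (exp_const d _ T Emat IT N i j Hi Hj); reflexivity. }
  destruct (HT T Emat (Rge_refl T) Hex 0%nat 0%nat ltac:(lia) ltac:(lia)) as [Hre _].
  rewrite E00 in Hre. unfold proj in Hre. rewrite ghz_0 in Hre.
  cbn [re im Cmul Cconj C1 s2] in Hre.
  assert (Hsq : / sqrt 2 * / sqrt 2 = / 2).
  { rewrite <- Rinv_mult, sqrt_sqrt by lra. reflexivity. }
  replace (1 - (/ sqrt 2 * / sqrt 2 - 0 * - 0)) with (1/2) in Hre by (rewrite Hsq; field).
  rewrite Rabs_right in Hre; lra.
Qed.
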